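(* Let $M$ be an exact $\mathfrak{K}$-module. Then there are isomorphisms $\ker(1-t_2)/\ker\alpha_{02}\cong\ker N(s_1)/\ker\alpha_{01}$, $\operatorname{im}\alpha_{20}/\operatorname{im}(1-t_2)\cong\operatorname{im}\alpha_{10}/\operatorname{im}N(s_1)$, $\ker(1-t_0)/\ker\alpha_{20}\cong\ker(1-s_1)/\ker\alpha_{21}$, $\operatorname{im}\alpha_{02}/\operatorname{im}(1-t_0)\cong\operatorname{im}\alpha_{12}/\operatorname{im}(1-s_1)$, $\ker N(t_0)/\ker\alpha_{10}\cong\ker(1-s_2)/\ker\alpha_{12}$, $\operatorname{im}\alpha_{01}/\operatorname{im}N(t_0)\cong\operatorname{im}\alpha_{21}/\operatorname{im}(1-s_2)$; in particular, for each quotient $X/Y$ above, $Y\subseteq X$.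
   Context: Fix a prime $p$ and let $N(x)=1+x+\dots+x^{p-1}$. A ($\mathbb{Z}/2$-graded) $\mathfrak{K}$-module $M$ amounts to $\mathbb{Z}/2$-graded abelian groups $M_0,M_1,M_2$ with homomorphisms $\alpha_{jk}=\alpha^M_{jk}\colon M_k\to M_j$ for $j\ne k$ in $\{0,1,2\}$ ($\alpha_{12},\alpha_{21}$ grading-reversing, the others grading-preserving) such that $\alpha_{jk}\circ\alpha_{km}=0$ whenever $\{j,k,m\}=\{0,1,2\}$ and, writing $t_0:=1-\alpha_{02}\alpha_{20}$ on $M_0$, $s_1:=1-\alpha_{12}\alpha_{21}$ on $M_1$, $t_2:=1-\alpha_{20}\alpha_{02}$ and $s_2:=1-\alpha_{21}\alpha_{12}$ on $M_2$: $\alpha_{01}\alpha_{10}=N(t_0)$, $\alpha_{10}\alpha_{01}=N(s_1)$, $N(t_2)+N(s_2)=p\cdot\mathrm{id}_{M_2}$. (This is the module-level form of the presentation of Köhler's ring $\mathfrak{K}$.) $M$ is exact if the cyclic sequences $M_0\xrightarrow{\alpha_{10}}M_1\xrightarrow{\alpha_{21}}M_2\xrightarrow{\alpha_{02}}M_0$ and $M_0\xrightarrow{\alpha_{20}}M_2\xrightarrow{\alpha_{12}}M_1\xrightarrow{\alpha_{01}}M_0$ are exact at every place. *)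

(* Defs.v *)
From HB Require Import structures.
From mathcomp Require Import all_boot all_order all_algebra.
Set Implicit Arguments. Unset Strict Implicit. Unset Printing Implicit Defensive.
Import GRing.Theory.
Local Open Scope ring_scope.

(* A Z/2-graded abelian group: an abelian group V together with the two
   projections gpr false (onto the even part) and gpr true (onto the odd part)
   of a direct sum decomposition V = V^0 (+) V^1. *)
Record grZmod := GrZmod {
  gcar :> zmodType;
  gpr : bool -> {additive gcar -> gcar};
  gpr_sum : forall x, gpr false x + gpr true x = x;
  gpr_idem : forall d x, gpr d (gpr d x) = gpr d x;
  gpr_orth : forall d x, gpr d (gpr (~~ d) x) = 0 }.

Definition homog (U V : grZmod) (b : bool) (f : U -> V) : Prop :=
  forall d x, f (gpr U d x) = gpr V (addb d b) (f x).

Definition Nf (p : nat) (V : zmodType) (f : V -> V) (x : V) : V :=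
  \sum_(i < p) iter i f x.

Record Kdata := KData {
  KM0 : grZmod; KM1 : grZmod; KM2 : grZmod;
  a01 : {additive KM1 -> KM0}; a10 : {additive KM0 -> KM1};
  a02 : {additive KM2 -> KM0}; a20 : {additive KM0 -> KM2};
  a12 : {additive KM2 -> KM1}; a21 : {additive KM1 -> KM2} }.

Section KOps.
Variable M : Kdata.
Definition t0 (x : KM0 M) : KM0 M := x - a02 M (a20 M x).
Definition s1 (x : KM1 M) : KM1 M := x - a12 M (a21 M x).
Definition t2 (x : KM2 M) : KM2 M := x - a20 M (a02 M x).
Definition s2 (x : KM2 M) : KM2 M := x - a21 M (a12 M x).
End KOps.

Definition is_Kmodule (p : nat) (M : Kdata) : Prop :=
  [/\ (homog false (a01 M) /\ homog false (a10 M) /\ homog false (a02 M) /\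
       homog false (a20 M) /\ homog true (a12 M) /\ homog true (a21 M)),
      ((forall x, a01 M (a12 M x) = 0) /\ (forall x, a02 M (a21 M x) = 0) /\
       (forall x, a10 M (a02 M x) = 0) /\ (forall x, a12 M (a20 M x) = 0) /\
       (forall x, a20 M (a01 M x) = 0) /\ (forall x, a21 M (a10 M x) = 0)),
      forall x, a01 M (a10 M x) = Nf p (@t0 M) x,
      forall x, a10 M (a01 M x) = Nf p (@s1 M) x &
      forall x, Nf p (@t2 M) x + Nf p (@s2 M) x = x *+ p].

Definition kerP (U V : zmodType) (f : U -> V) : U -> Prop := fun x => f x = 0.
Definition imP (U V : zmodType) (f : U -> V) : V -> Prop :=
  fun y => exists x, f x = y.

Definition exact_at (U V W : zmodType) (f : U -> V) (g : V -> W) : Prop :=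
  forall y, kerP g y <-> imP f y.

Definition is_exact (M : Kdata) : Prop :=
  exact_at (a10 M) (a21 M) /\ exact_at (a21 M) (a02 M) /\
  exact_at (a02 M) (a10 M) /\ exact_at (a20 M) (a12 M) /\
  exact_at (a12 M) (a01 M) /\ exact_at (a01 M) (a20 M).

Definition subP (U : Type) (Y X : U -> Prop) : Prop := forall x, Y x -> X x.

(* The subquotient X/(X ∩ Y) of U is isomorphic, by a graded isomorphism of
   degree b, to X'/(X' ∩ Y') of V.  Such an isomorphism is given through a
   choice of representatives: a map f from X to X' which is additive modulo Y',
   well defined and injective (f x ∈ Y' iff x ∈ Y), surjective modulo Y', and
   compatible with the grading projections modulo Y'. *)
Definition sq_iso (U V : grZmod) (b : bool)
    (X Y : U -> Prop) (X' Y' : V -> Prop) : Prop :=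
  exists f : U -> V,
  [/\ forall x, X x -> X' (f x),
      forall x y, X x -> X y -> Y' (f (x + y) - f x - f y),
      forall x, X x -> (Y' (f x) <-> Y x),
      forall x', X' x' -> exists2 x, X x & Y' (f x - x')
    & forall d x, X x -> Y' (f (gpr U d x) - gpr V (addb d b) (f x))].

Definition oneM (V : zmodType) (f : V -> V) (x : V) : V := x - f x.

(* Main.v *)
Require Import Defs.
From mathcomp Require Import all_boot all_order all_algebra.
From Stdlib Require Import ClassicalEpsilon.
Local Open Scope ring_scope.
Import GRing.Theory.

Lemma L1 (U V W : grZmod) (a b : bool) (A : {additive U -> W}) (B : {additive V -> W})
  (hA : homog a A) (hB : homog b B) (X Y : U -> Prop) (X' Y' : V -> Prop) :
  (forall x, X x <-> exists y, B y = A x) -> (forall x, Y x <-> A x = 0) ->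
  (forall y, X' y <-> exists x, A x = B y) -> (forall y, Y' y <-> B y = 0) ->
  sq_iso (addb a b) X Y X' Y'.
Proof.
move=> HX HY HX' HY'.
pose f x := epsilon (inhabits (0 : V)) (fun y => B y = A x).
have Hf : forall x, X x -> B (f x) = A x.
  by move=> x /HX Ex; apply: (epsilon_spec _ _ Ex).
exists f; split.
- by move=> x Xx; apply/HX'; exists x; rewrite Hf.
- move=> x y Xx Xy; apply/HY'.
  have Xxy : X (x + y).
    by apply/HX; case/HX: Xx => u Hu; case/HX: Xy => v Hv; exists (u + v); rewrite !raddfD Hu Hv.
  by rewrite !raddfB !Hf // raddfD -addrA -opprD subrr.
- by move=> x Xx; rewrite HY' HY Hf.
- move=> x' /HX' [x Hx]; exists x.
    by apply/HX; exists x'.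
  apply/HY'; rewrite raddfB Hf ?Hx ?subrr //.
  by apply/HX; exists x'.
- move=> d x Xx; apply/HY'.
  have Xd : X (gpr U d x).
    case/HX: Xx => y Hy; apply/HX; exists (gpr V (addb (addb d a) b) y).
    by rewrite hB hA Hy; case: a b d {hA hB Hy} => [] [] [].
  rewrite raddfB Hf // hB Hf // hA.
  by case: a b d {hA hB Xd Hf} => [] [] []; rewrite subrr.
Qed.

Lemma L2 (U V W : grZmod) (a b : bool) (A : {additive W -> U}) (B : {additive W -> V})
  (hA : homog a A) (hB : homog b B) (X Y : U -> Prop) (X' Y' : V -> Prop) :
  (forall x, X x <-> exists w, A w = x) -> (forall y, X' y <-> exists w, B w = y) ->
  (forall w, Y (A w) <-> Y' (B w)) -> Y 0 ->
  sq_iso (addb a b) X Y X' Y'.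
Proof.
move=> HX HX' HYY Y0.
pose u x := epsilon (inhabits (0 : W)) (fun w => A w = x).
have Hu : forall x, X x -> A (u x) = x.
  by move=> x /HX Ex; apply: (epsilon_spec _ _ Ex).
have K : forall w, A w = 0 -> Y' (B w) by move=> w Hw; apply/HYY; rewrite Hw.
exists (fun x => B (u x)); split.
- by move=> x Xx; apply/HX'; exists (u x).
- move=> x y Xx Xy.
  have Xxy : X (x + y).
    by apply/HX; case/HX: Xx => v Hv; case/HX: Xy => w Hw; exists (v + w); rewrite raddfD Hv Hw.
  rewrite -!raddfB; apply: K; rewrite !raddfB !Hu //.
  by rewrite -addrA -opprD subrr.
- by move=> x Xx; rewrite -HYY Hu.
- move=> x' /HX' [w Hw]; exists (A w); first by apply/HX; exists w.
  rewrite -Hw -raddfB; apply: K; rewrite raddfB Hu ?subrr //.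
  by apply/HX; exists w.
- move=> d x Xx.
  have Xd : X (gpr U d x) by apply/HX; exists (gpr W (addb d a) (u x)); rewrite hA Hu // addbK.
  have -> : gpr V (addb d (addb a b)) (B (u x)) = B (gpr W (addb d a) (u x)).
    by rewrite hB addbA.
  rewrite -raddfB; apply: K; rewrite raddfB Hu // hA Hu // addbK.
exact: subrr.
Qed.
Theorem lemma5p15 (p : nat) (M : Kdata) :
  prime p -> is_Kmodule p M -> is_exact M ->
  (* the six isomorphisms of subquotients *)
  (sq_iso false (kerP (oneM (@t2 M))) (kerP (a02 M))
                (kerP (Nf p (@s1 M))) (kerP (a01 M)) /\
   sq_iso false (imP (a20 M)) (imP (oneM (@t2 M)))
                (imP (a10 M)) (imP (Nf p (@s1 M))) /\
   sq_iso true (kerP (oneM (@t0 M))) (kerP (a20 M))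
               (kerP (oneM (@s1 M))) (kerP (a21 M)) /\
   sq_iso true (imP (a02 M)) (imP (oneM (@t0 M)))
               (imP (a12 M)) (imP (oneM (@s1 M))) /\
   sq_iso true (kerP (Nf p (@t0 M))) (kerP (a10 M))
               (kerP (oneM (@s2 M))) (kerP (a12 M)) /\
   sq_iso true (imP (a01 M)) (imP (Nf p (@t0 M)))
               (imP (a21 M)) (imP (oneM (@s2 M)))) /\
  (* for each quotient X/Y above, Y is contained in X *)
  (subP (kerP (a02 M)) (kerP (oneM (@t2 M))) /\
   subP (kerP (a01 M)) (kerP (Nf p (@s1 M))) /\
   subP (imP (oneM (@t2 M))) (imP (a20 M)) /\
   subP (imP (Nf p (@s1 M))) (imP (a10 M)) /\
   subP (kerP (a20 M)) (kerP (oneM (@t0 M))) /\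
   subP (kerP (a21 M)) (kerP (oneM (@s1 M))) /\
   subP (imP (oneM (@t0 M))) (imP (a02 M)) /\
   subP (imP (oneM (@s1 M))) (imP (a12 M)) /\
   subP (kerP (a10 M)) (kerP (Nf p (@t0 M))) /\
   subP (kerP (a12 M)) (kerP (oneM (@s2 M))) /\
   subP (imP (Nf p (@t0 M))) (imP (a01 M)) /\
   subP (imP (oneM (@s2 M))) (imP (a21 M))).
Proof.
move=> _ [[h01 [h10 [h02 [h20 [h12 h21]]]]] [z0112 [z0221 [z1002 [z1220 [z2001 z2110]]]]] H01 H10 _] [e1 [e2 [e3 [e4 [e5 e6]]]]].
have oK : forall (V : zmodType) (x y : V), x - (x - y) = y.
  by move=> V x y; rewrite opprB addrC subrK.
have o2 : forall x, oneM (@t2 M) x = a20 M (a02 M x) by move=> x; apply: oK.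
have o0 : forall x, oneM (@t0 M) x = a02 M (a20 M x) by move=> x; apply: oK.
have o1 : forall x, oneM (@s1 M) x = a12 M (a21 M x) by move=> x; apply: oK.
have o3 : forall x, oneM (@s2 M) x = a21 M (a12 M x) by move=> x; apply: oK.
have N0 : forall x, Nf p (@t0 M) x = a01 M (a10 M x) by move=> x; rewrite H01.
have N1 : forall x, Nf p (@s1 M) x = a10 M (a01 M x) by move=> x; rewrite H10.
split.
  split; [|split; [|split; [|split; [|split]]]].
  - apply: (@L1 _ _ _ false false _ _ h02 h01) => x //.
      by rewrite /kerP o2; apply: e6.
    by rewrite /kerP N1; apply: e3.
  - apply: (@L2 _ _ _ false false _ _ h20 h10) => //; last by exists 0; rewrite ?o0 ?o1 ?o2 ?o3 ?N0 ?N1 !raddf0.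
    move=> w; split.
      case=> x; rewrite o2 => Hx.
      have [y Hy] : exists y, a01 M y = w - a02 M x.
        by apply/e6; rewrite /kerP raddfB Hx subrr.
      by exists y; rewrite N1 Hy raddfB z1002 subr0.
    case=> y; rewrite N1 => Hy.
    have [x Hx] : exists x, a02 M x = w - a01 M y.
      by apply/e3; rewrite /kerP raddfB Hy subrr.
    by exists x; rewrite o2 Hx raddfB z2001 subr0.
  - apply: (@L1 _ _ _ false true _ _ h20 h21) => x //.
      by rewrite /kerP o0; apply: e2.
    by rewrite /kerP o1; apply: e4.
  - apply: (@L2 _ _ _ false true _ _ h02 h12) => //; last by exists 0; rewrite ?o0 ?o1 ?o2 ?o3 ?N0 ?N1 !raddf0.
    move=> w; split.
      case=> x; rewrite o0 => Hx.
      have [y Hy] : exists y, a21 M y = w - a20 M x.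
        by apply/e2; rewrite /kerP raddfB Hx subrr.
      by exists y; rewrite o1 Hy raddfB z1220 subr0.
    case=> y; rewrite o1 => Hy.
    have [x Hx] : exists x, a20 M x = w - a21 M y.
      by apply/e4; rewrite /kerP raddfB Hy subrr.
    by exists x; rewrite o0 Hx raddfB z0221 subr0.
  - apply: (@L1 _ _ _ false true _ _ h10 h12) => x //.
      by rewrite /kerP N0; apply: e5.
    by rewrite /kerP o3; apply: e1.
  - apply: (@L2 _ _ _ false true _ _ h01 h21) => //; last by exists 0; rewrite ?o0 ?o1 ?o2 ?o3 ?N0 ?N1 !raddf0.
    move=> w; split.
      case=> x; rewrite N0 => Hx.
      have [y Hy] : exists y, a12 M y = w - a10 M x.
        by apply/e5; rewrite /kerP raddfB Hx subrr.
      by exists y; rewrite o3 Hy raddfB z2110 subr0.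
    case=> y; rewrite o3 => Hy.
    have [x Hx] : exists x, a10 M x = w - a12 M y.
      by apply/e1; rewrite /kerP raddfB Hy subrr.
    by exists x; rewrite N0 Hx raddfB z0112 subr0.
do 11 (split; first (first [ move=> x; rewrite /kerP ?o0 ?o1 ?o2 ?o3 ?N0 ?N1 => ->; exact: raddf0
  | move=> _ [x <-]; first [ exists (a02 M x); by rewrite o2 | exists (a01 M x); by rewrite N1
  | exists (a20 M x); by rewrite o0 | exists (a21 M x); by rewrite o1 | exists (a10 M x); by rewrite N0
  | exists (a12 M x); by rewrite o3]])).
move=> _ [x <-]; exists (a12 M x); by rewrite o3.
Qed.
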